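(* Let $C$ be a quasi-category and $c\in C_0$ a vertex. Then for every $n\geq2$ the homotopy monoid $\tau_n(C^e,c)$ is a group.
   Context: A stratified simplicial set is a pair $(X,tX)$ where $X$ is a simplicial set and $tX$ is a set of simplices of $X$ (thin simplices) containing all degenerate simplices and no $0$-simplices; stratified maps are simplicial maps preserving thin simplices. For a quasi-category $C$, $C^e$ is the stratified simplicial set with underlying simplicial set $C$ whose thin simplices are the degenerate simplices, all simplices of dimension $\ge 2$, and the $1$-simplices of $C$ that are equivalences (isomorphisms in the homotopy category of $C$); $C^e$ is a weak complicial set. In particular every simplex of $C^e$ of dimension $\geq 2$ is thin. For $n\ge1$, $\Delta[n]_t$ is $\Delta[n]$ with thin simplices the degenerate ones and $\mathrm{Id}_{[n]}$. For $k\in[n]$, $\Delta^k[n]$ is $\Delta[n]$ with thin simplices the degenerate ones and all $\alpha:[m]\to[n]$ with $\{k-1,k,k+1\}\cap[n]\subset\mathrm{Im}(\alpha)$. The product $X\circledast Y$ has underlying simplicial set $X\times Y$, with $(x,y)$ thin iff $x$ and $y$ are thin. For stratified maps $f,g:A\to X$ and an inclusion $B\hookrightarrow A$ with $f|_B=g|_B$, $f\sim_B g$ means there is a stratified map $H:A\circledast\Delta[1]_t\to X$ with $H|_{A\times\{0\}}=f$, $H|_{A\times\{1\}}=g$ and $H|_{B\circledast\Delta[1]_t}=f|_B\circ\mathrm{proj}_B$; $n$-simplices are regarded as stratified maps from $\Delta[n]$ with only degenerate simplices thin. For a weak complicial set $X$, vertex $x$, and $n\ge1$, $\tau_n(X,x)$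 is the set of $\sim_{\partial\Delta[n]}$-classes of $n$-simplices $\alpha$ whose restriction to $\partial\Delta[n]$ is constant at $x$, with multiplication $[\alpha][\beta]=[d_n\theta]$ where $\theta:\Delta^n[n+1]\to X$ is any stratified map with $d_{n-1}\theta=\alpha$, $d_{n+1}\theta=\beta$, and $d_i\theta$ constant at $x$ for $i\notin\{n-1,n,n+1\}$; this is a monoid with unit the class of the constant simplex at $x$. *)

(* Defs.v *)
From mathcomp Require Import all_boot.
Set Implicit Arguments.
Unset Strict Implicit.
Unset Printing Implicit Defensive.

Definition monob m n (f : {ffun 'I_m.+1 -> 'I_n.+1}) : bool :=
  [forall i : 'I_m.+1, forall j : 'I_m.+1, (i <= j) ==> (f i <= f j)].

Definition Mor m n := {f : {ffun 'I_m.+1 -> 'I_n.+1} | monob f}.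

Lemma comp_mono l m n (g : {ffun 'I_m.+1 -> 'I_n.+1}) (f : {ffun 'I_l.+1 -> 'I_m.+1}) :
  monob g -> monob f -> monob [ffun i => g (f i)].
Proof.
move=> /forallP Hg /forallP Hf; apply/forallP=> i; apply/forallP=> j; rewrite !ffunE.
apply/implyP=> Hij; have /forallP/(_ j)/implyP/(_ Hij) Hf' := Hf i.
by have /forallP/(_ (f j))/implyP/(_ Hf') := Hg (f i).
Qed.

Lemma id_mono n : monob [ffun i : 'I_n.+1 => i].
Proof. by apply/forallP=> i; apply/forallP=> j; rewrite !ffunE; apply/implyP. Qed.

Definition compM l m n (g : Mor m n) (f : Mor l m) : Mor l n :=
  exist _ [ffun i => val g (val f i)] (comp_mono (valP g) (valP f)).

Definition idM n : Mor n n := exist _ [ffun i => i] (id_mono n).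

Lemma compMA k l m n (h : Mor m n) (g : Mor l m) (f : Mor k l) :
  compM h (compM g f) = compM (compM h g) f.
Proof. by apply: val_inj; apply/ffunP=> i; rewrite /= !ffunE. Qed.

Lemma compM1 m n (g : Mor m n) : compM g (idM m) = g.
Proof. by apply: val_inj; apply/ffunP=> i; rewrite /= !ffunE. Qed.

Record sSet := SSet {
  sob :> nat -> Type;
  sact : forall m n, Mor m n -> sob n -> sob m;
  sact_id : forall n (x : sob n), sact (idM n) x = x;
  sact_comp : forall l m n (f : Mor l m) (g : Mor m n) (x : sob n),
      sact f (sact g x) = sact (compM g f) x }.

Record sMap (X Y : sSet) := SMap {
  smap :> forall n, X n -> Y n;
  smap_nat : forall m n (f : Mor m n) (x : X n),
      smap (@sact X _ _ f x) = @sact Y _ _ f (smap x) }.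

Definition Delta (n : nat) : sSet :=
  @SSet (fun m => Mor m n) (fun m k f a => compM a f)
        (fun k a => compM1 a) (fun l m k f g a => esym (compMA a g f)).

Definition prodS (X Y : sSet) : sSet.
Proof.
refine (@SSet (fun m => (X m * Y m)%type)
          (fun m k f p => (@sact X _ _ f p.1, @sact Y _ _ f p.2)) _ _).
- by move=> k [x y] /=; rewrite !sact_id.
- by move=> l m k f g [x y] /=; rewrite !sact_comp.
Defined.

Definition hornb n (k : nat) m (a : Mor m n) : bool :=
  [exists j : 'I_n.+1, (nat_of_ord j != k) && [forall i : 'I_m.+1, val a i != j]].

Lemma horn_closed n k l m (a : Mor m n) (f : Mor l m) :
  hornb k a -> hornb k (compM a f).
Proof.
case/existsP=> j /andP [Hj /forallP Ha]; apply/existsP; exists j.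
by rewrite Hj /=; apply/forallP=> i; rewrite ffunE.
Qed.

Definition Horn (n k : nat) : sSet.
Proof.
refine (@SSet (fun m => {a : Mor m n | hornb k a})
          (fun m l f a => exist _ (compM (val a) f) (horn_closed f (valP a))) _ _).
- by move=> l a; apply: val_inj; rewrite /= compM1.
- by move=> l m p f g a; apply: val_inj; rewrite /= compMA.
Defined.

Definition quasicat (C : sSet) : Prop :=
  forall n k, 0 < k < n -> forall h : sMap (Horn n k) C,
    exists s : sMap (Delta n) C, forall m (a : Horn n k m), s m (val a) = h m a.

Definition degenerate (X : sSet) n (x : X n) : Prop :=
  exists m (f : Mor n m) (y : X m), m < n /\ x = @sact X _ _ f y.

Lemma lift_mono n (i : 'I_n.+2) : monob [ffun j : 'I_n.+1 => lift i j].
Proof.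
apply/forallP=> j; apply/forallP=> j'; rewrite !ffunE; apply/implyP=> H.
by rewrite /= leq_bump2.
Qed.

Definition dface n (i : nat) : Mor n n.+1 :=
  exist (fun f => monob f) _ (lift_mono (inord i : 'I_n.+2)).

Definition face (X : sSet) n (i : nat) (x : X n.+1) : X n := @sact X _ _ (dface n i) x.

Lemma const_mono m n (c : 'I_n.+1) : monob [ffun _ : 'I_m.+1 => c].
Proof. by apply/forallP=> i; apply/forallP=> j; rewrite !ffunE leqnn implybT. Qed.

Definition constM m n (c : 'I_n.+1) : Mor m n := exist (fun f => monob f) _ (const_mono m c).

Definition const_s (X : sSet) n (x : X 0) : X n := @sact X _ _ (constM n ord0) x.

Definition surjb m n (b : Mor m n) : bool := [forall j : 'I_n.+1, [exists i : 'I_m.+1, val b i == j]].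

(* a is an n-simplex whose restriction to the boundary is constant at x *)
Definition sphere (X : sSet) n (x : X 0) (a : X n) : Prop :=
  forall m (b : Mor m n), ~~ surjb b -> @sact X _ _ b a = const_s m x.

Definition is_equiv (C : sSet) (f : C 1) : Prop :=
  exists (g : C 1) (s t : C 2),
    [/\ face 2 s = f, face 0 s = g & face 1 s = const_s 1 (face 1 f)] /\
    [/\ face 2 t = g, face 0 t = f & face 1 t = const_s 1 (face 0 f)].

Record strat := Strat { sS :> sSet; thin : forall n, sS n -> Prop }.

Definition stratMap (A X : strat) :=
  {f : sMap A X | forall n (a : A n), thin a -> thin (f n a)}.

Definition stratProd (A B : strat) : strat :=
  @Strat (prodS A B) (fun m p => thin p.1 /\ thin p.2).

Definition Delta_min n : strat := @Strat (Delta n) (fun m a => @degenerate (Delta n) m a).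

Definition Delta_t n : strat :=
  @Strat (Delta n) (fun m (a : Mor m n) =>
    @degenerate (Delta n) m a \/ (m = n /\ forall i : 'I_m.+1, nat_of_ord (val a i) = i)).

Definition DeltaK n k : strat :=
  @Strat (Delta n) (fun m (a : Mor m n) =>
    @degenerate (Delta n) m a \/
    forall j : nat, j <= n -> [|| j.+1 == k, j == k | j == k.+1] ->
      exists i, nat_of_ord (val a i) = j).

Definition Ce_thin1 (C : sSet) m : C m -> Prop :=
  match m return C m -> Prop with
  | 1 => fun x => is_equiv x
  | _ => fun _ => False
  end.

Definition Ce (C : sSet) : strat :=
  @Strat C (fun m x => degenerate x \/ 2 <= m \/ Ce_thin1 x).

(* a ~_{boundary Delta[n]} b, for n-simplices a, b viewed as stratified maps
   Delta[n] -> X (only degenerate simplices thin) *)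
Definition htpy_bd (X : strat) n (a b : X n) : Prop :=
  exists H : stratMap (stratProd (Delta_min n) (Delta_t 1)) X,
    forall m (bt : Mor m n),
      [/\ proj1_sig H m (bt, constM m ord0) = @sact X _ _ bt a,
          proj1_sig H m (bt, constM m ord_max) = @sact X _ _ bt b
        & ~~ surjb bt -> forall g : Mor m 1, proj1_sig H m (bt, g) = @sact X _ _ bt a].

(* [a][b] = [g] in tau_n(X, x): some theta : Delta^n[n+1] -> X with
   d_{n-1} theta = a, d_{n+1} theta = b, the other faces except d_n constant
   at x, and d_n theta ~ g. *)
Definition tau_mul (X : strat) (x : X 0) n (a b g : X n) : Prop :=
  exists th : stratMap (DeltaK n.+1 n) X,
    [/\ proj1_sig th n (dface n n.-1) = a,
        proj1_sig th n (dface n n.+1) = b,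
        (forall i, i <= n.+1 -> i != n.-1 -> i != n -> i != n.+1 ->
           proj1_sig th n (dface n i) = const_s n x)
      & htpy_bd (proj1_sig th n (dface n n)) g].

(* Main.v *)
Require Import Defs.
From mathcomp Require Import all_boot.
From mathcomp Require Import zify.
Set Implicit Arguments.
Unset Strict Implicit.
Unset Printing Implicit Defensive.

Lemma morP m N (f g : Mor m N) :
  (forall i, nat_of_ord (val f i) = nat_of_ord (val g i)) -> f = g.
Proof. by move=> H; apply: val_inj; apply/ffunP=> i; apply: val_inj; apply: H. Qed.

Lemma compME l m N (g : Mor m N) (f : Mor l m) i : val (compM g f) i = val g (val f i).
Proof. by rewrite /= ffunE. Qed.

Lemma comp1M m n (g : Mor m n) : compM (idM n) g = g.
Proof. by apply: morP => i; rewrite compME /= ffunE. Qed.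

Lemma dfaceE N j x : j <= N.+1 -> nat_of_ord (val (dface N j) x) = bump j x.
Proof. by move=> Hj; rewrite /= ffunE /= inordK. Qed.

Lemma constME m N (c : 'I_N.+1) i : val (constM m c) i = c.
Proof. by rewrite /= ffunE. Qed.

Lemma idME n i : val (idM n) i = i.
Proof. by rewrite /= ffunE. Qed.

Definition missb m N (a : Mor m N) (j : nat) := [forall i, nat_of_ord (val a i) != j].

Lemma missbP m N (a : Mor m N) j : missb a j -> forall i, nat_of_ord (val a i) != j.
Proof. by move/forallP. Qed.

Lemma missb_comp l m N (a : Mor m N) (f : Mor l m) j : missb a j -> missb (compM a f) j.
Proof. by move=> H; apply/forallP=> i; rewrite compME; apply: missbP. Qed.

Lemma hornb_of N k m (a : Mor m N) j : j <= N -> j != k -> missb a j -> hornb k a.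
Proof.
move=> HjN Hjk Hm; apply/existsP; exists (inord j); rewrite inordK ?ltnS // Hjk /=.
apply/forallP=> i; apply/negP=> /eqP E; have := missbP Hm i.
by rewrite E inordK ?ltnS // eqxx.
Qed.

Lemma hornb_inv N k m (a : Mor m N) : hornb k a -> exists j, [/\ j <= N, j != k & missb a j].
Proof.
case/existsP=> j /andP [Hj /forallP H]; exists j; split => //; first by rewrite -ltnS ltn_ord.
apply/forallP=> i; have := H i; apply: contra => /eqP E; apply/eqP; exact: val_inj.
Qed.

Lemma surjb_inv m N (b : Mor m N) : ~~ surjb b -> exists j, j <= N /\ missb b j.
Proof.
move/forallPn=> [j /existsPn H]; exists j; split; first by rewrite -ltnS ltn_ord.
apply/forallP=> i; have := H i; apply: contra => /eqP E; apply/eqP; exact: val_inj.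
Qed.

Lemma nonsurj m N (b : Mor m N) j : j <= N -> missb b j -> ~~ surjb b.
Proof.
move=> HjN Hm; apply/negP => /forallP /(_ (inord j)) /existsP [i /eqP E].
by have := missbP Hm i; rewrite E inordK ?ltnS // eqxx.
Qed.

Lemma sphere_const (X : sSet) n (x : X 0) (a : X n) m (b : Mor m n) j :
  sphere x a -> j <= n -> missb b j -> sact b a = const_s m x.
Proof. by move=> Ha Hj Hm; apply: Ha; apply: nonsurj Hm. Qed.

Lemma const_nat (X : sSet) l m (f : Mor l m) (x : X 0) : sact f (const_s m x) = const_s l x.
Proof.
rewrite /const_s sact_comp; congr sact; apply: morP => i.
by rewrite compME !constME.
Qed.

Lemma postM_mono m M N (t : nat -> nat) (Ht : {homo t : x y / x <= y}) (a : Mor m M) :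
  monob [ffun i => (inord (minn (t (val a i)) N) : 'I_N.+1)].
Proof.
apply/forallP=> i; apply/forallP=> j; rewrite !ffunE; apply/implyP=> Hij.
have := valP a; move/forallP/(_ i)/forallP/(_ j)/implyP/(_ Hij) => H.
rewrite !inordK ?ltnS ?geq_minr //; have := Ht _ _ H; lia.
Qed.

Definition postM m M N (t : nat -> nat) (Ht : {homo t : x y / x <= y}) (a : Mor m M) : Mor m N :=
  exist (fun f => monob f) _ (postM_mono N Ht a).

Lemma postME m M N t (Ht : {homo t : x y / x <= y}) (a : Mor m M) i :
  nat_of_ord (val (postM N Ht a) i) = minn (t (val a i)) N.
Proof. by rewrite /= ffunE inordK // ltnS geq_minr. Qed.

Lemma postM_comp l m M N t (Ht : {homo t : x y / x <= y}) (a : Mor m M) (f : Mor l m) :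
  postM N Ht (compM a f) = compM (postM N Ht a) f.
Proof. by apply: morP => i; rewrite postME compME compME postME. Qed.

Lemma missb_post m M N t (Ht : {homo t : x y / x <= y}) (a : Mor m M) j (P : nat -> bool) :
  (forall i, P (val a i)) -> (forall x, x <= M -> P x -> minn (t x) N != j) ->
  missb (postM N Ht a) j.
Proof.
move=> HP Ht2; apply/forallP=> i; rewrite postME; apply: Ht2 => //.
by rewrite -ltnS ltn_ord.
Qed.

Lemma unbump_homo j : {homo unbump j : x y / x <= y}.
Proof. move=> x y; rewrite /unbump; lia. Qed.

Lemma sact_face (X : sSet) N (t : X N.+1) m (a : Mor m N.+1) j :
  j <= N.+1 -> missb a j -> sact a t = sact (postM N (@unbump_homo j) a) (face j t).
Proof.
move=> Hj Hm; rewrite /face sact_comp; congr sact; apply: morP => i.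
rewrite compME dfaceE // postME; have := missbP Hm i; have := ltn_ord (val a i).
rewrite /bump /unbump; lia.
Qed.

Lemma missb_dface N j : j <= N.+1 -> missb (dface N j) j.
Proof. by move=> Hj; apply/forallP=> i; rewrite dfaceE //; rewrite /bump; lia. Qed.

Definition yon (X : sSet) N (t : X N) : sMap (Delta N) X.
Proof.
refine (@SMap (Delta N) X (fun m a => sact a t) _).
by move=> m k f a /=; rewrite sact_comp.
Defined.

Lemma smap_yon (X : sSet) N (s : sMap (Delta N) X) m (a : Mor m N) :
  s m a = sact a (s N (idM N)).
Proof. by rewrite -smap_nat /= comp1M. Qed.

Lemma yon_strat (C : sSet) N k (t : C N) : 1 <= k -> k < N ->
  forall m (a : Mor m N), @thin (DeltaK N k) m a -> @thin (Ce C) m (yon t m a).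
Proof.
move=> Hk HkN m a [[m' [f [y [Hm Hy]]]]|Hhit].
  left; exists m', f, (sact y t); split => //; rewrite Hy /= sact_comp //.
case: (leqP 2 m) => Hm; first by right; left.
exfalso.
have [i1 E1] := Hhit k.-1 ltac:(lia) ltac:(apply/orP; left; apply/eqP; lia).
have [i2 E2] := Hhit k ltac:(lia) ltac:(apply/orP; right; apply/orP; left; apply/eqP; lia).
have [i3 E3] := Hhit k.+1 ltac:(lia) ltac:(apply/orP; right; apply/orP; right; apply/eqP; lia).
have L1 := ltn_ord i1; have L2 := ltn_ord i2; have L3 := ltn_ord i3.
have : nat_of_ord i1 = i2 \/ nat_of_ord i1 = i3 \/ nat_of_ord i2 = i3 by lia.
case=> [/val_inj E|[/val_inj E|/val_inj E]]; subst; lia.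
Qed.

Definition yonS (C : sSet) N k (t : C N) (Hk : 1 <= k) (HkN : k < N) :
  stratMap (DeltaK N k) (Ce C) :=
  exist (fun f : sMap (DeltaK N k) (Ce C) => forall n a, thin a -> thin (f n a))
    (yon t) (yon_strat t Hk HkN).

Definition cstmap (X : sSet) (x : X 0) (A : sSet) : sMap A X.
Proof.
refine (@SMap A X (fun m _ => const_s m x) _).
by move=> m k f y; rewrite const_nat.
Defined.

Lemma htpy_const (C : sSet) n (c : C 0) :
  htpy_bd (X := Ce C) (const_s n c) (const_s n c).
Proof.
have HH : forall m (p : stratProd (Delta_min n) (Delta_t 1) m), thin p ->
    @thin (Ce C) m (cstmap c (stratProd (Delta_min n) (Delta_t 1)) m p).
  move=> m [bt g] [[m' [f [y [Hm _]]]] _].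
  left; exists 0, (constM m ord0), c; split => //; lia.
exists (exist _ _ HH) => m bt; split => //=; rewrite ?const_nat //.
Qed.

Definition h1fun (C : sSet) (c : C 0) n (a : C n) m (al : Mor m n.+1) : C m :=
  if missb al n.+1 then sact (postM n (@unbump_homo n.+1) al) a else const_s m c.

Lemma h1_F1 (C : sSet) (c : C 0) n (a : C n) m (al : Mor m n.+1) :
  missb al n.+1 -> h1fun c a al = sact (postM n (@unbump_homo n.+1) al) a.
Proof. by rewrite /h1fun => ->. Qed.

Lemma h1_F2 (C : sSet) (c : C 0) n (a : C n) m (al : Mor m n.+1) j :
  sphere c a -> j <= n -> missb al j -> h1fun c a al = const_s m c.
Proof.
rewrite /h1fun => Ha Hj Hm; case: ifP => // Hm1.
apply: (sphere_const (j := j)) => //.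
apply: (@missb_post _ _ _ _ _ _ _ (fun x => (x != j) && (x != n.+1))).
  by move=> i; rewrite (missbP Hm) (missbP Hm1).
move=> x Hx /andP [H1 H2]; rewrite /unbump; lia.
Qed.

Definition h1 (C : sSet) (c : C 0) n (a : C n) (Ha : sphere c a) : sMap (Horn n.+1 n.-1) C.
Proof.
refine (@SMap (Horn n.+1 n.-1) C (fun m al => h1fun c a (val al)) _).
move=> m k f [al Hal] /=.
have [j [HjN Hjk Hm]] := hornb_inv Hal.
case: (ltnP n j) => Hjn.
  have Ej : j = n.+1 by lia.
  subst j; rewrite !h1_F1 ?missb_comp // postM_comp sact_comp //.
by rewrite !(h1_F2 (j := j)) ?missb_comp // const_nat.
Defined.

Lemma missb_dcomp N j k m (b : Mor m N) : j <= N.+1 -> missb b k ->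
  missb (compM (dface N j) b) (bump j k).
Proof.
move=> Hj Hm; apply/forallP=> i; rewrite compME dfaceE //.
have := missbP Hm i; rewrite /bump; lia.
Qed.

Lemma missb_dcomp1 N j m (b : Mor m N) : j <= N.+1 -> missb (compM (dface N j) b) j.
Proof. by move=> Hj; apply: missb_comp; apply: missb_dface. Qed.

Lemma step1 (C : sSet) (HC : quasicat C) (c : C 0) n (Hn : 2 <= n) (a : C n) (Ha : sphere c a) :
  exists th : C n.+1, [/\ face n.+1 th = a,
     (forall i, i <= n -> i != n.-1 -> face i th = const_s n c)
   & sphere c (face n.-1 th)].
Proof.
have [s Hs] := HC n.+1 n.-1 ltac:(apply/andP; split; lia) (h1 Ha).
have Hsh : forall m (g : Mor m n.+1) j, j <= n.+1 -> j != n.-1 -> missb g j ->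
    s m g = h1fun c a g.
  move=> m g j Hj Hjk Hm.
  exact: (Hs m (exist _ g (hornb_of Hj Hjk Hm))).
exists (s n.+1 (idM n.+1)); split.
- rewrite /face -smap_yon (Hsh _ _ n.+1); [|lia|lia|apply: missb_dface; lia].
  rewrite h1_F1; last by apply: missb_dface.
  have -> : postM n (@unbump_homo n.+1) (dface n n.+1) = idM n.
    apply: morP => i; rewrite postME dfaceE // idME.
    have := ltn_ord i; rewrite /bump /unbump; lia.
  by rewrite sact_id.
- move=> i Hi Hik; rewrite /face -smap_yon (Hsh _ _ i); [|lia|lia|apply: missb_dface; lia].
  by rewrite (h1_F2 (j := i)) //; apply: missb_dface; lia.
- move=> m b Hb; have [j [Hj Hm]] := surjb_inv Hb.
  rewrite /face sact_comp -smap_yon (Hsh _ _ (bump n.-1 j)); first last.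
  + by apply: missb_dcomp => //; lia.
  + rewrite /bump; lia.
  + rewrite /bump; lia.
  by rewrite (h1_F2 (j := n.-1)) //; [lia | apply: missb_dcomp1; lia].
Qed.

Definition tau1 n x := minn x n.
Definition tau2 n x := if x < n then x else if x <= n.+1 then n.-1 else n.
Lemma tau1_homo n : {homo tau1 n : x y / x <= y}.
Proof. move=> x y; rewrite /tau1; lia. Qed.
Lemma tau2_homo n : {homo tau2 n : x y / x <= y}.
Proof. move=> x y Hxy; rewrite /tau2; case: (ltnP x n); case: (ltnP y n); case: (leqP x n.+1); case: (leqP y n.+1); lia. Qed.

Definition h2fun (C : sSet) (c : C 0) n (a : C n) (th : C n.+1) m (al : Mor m n.+2) : C m :=
  if missb al n.+2 then sact (postM n.+1 (@unbump_homo n.+2) al) th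
  else if missb al n.+1 then sact (postM n (@tau1_homo n) al) a
  else if missb al n then sact (postM n (@tau2_homo n) al) a
  else const_s m c.


Lemma h2_E1 (C : sSet) (c : C 0) n (a : C n) (th : C n.+1) m (al : Mor m n.+2) :
  missb al n.+2 -> h2fun c a th al = sact (postM n.+1 (@unbump_homo n.+2) al) th.
Proof. by rewrite /h2fun => ->. Qed.

Lemma h2_E2 (C : sSet) (c : C 0) n (a : C n) (th : C n.+1) m (al : Mor m n.+2) :
  face n.+1 th = a ->
  missb al n.+1 -> h2fun c a th al = sact (postM n (@tau1_homo n) al) a.
Proof.
move=> Hta Hm1; rewrite /h2fun Hm1; case: ifP => // Hm2.
rewrite (@sact_face _ _ th _ _ n.+1) //; last first.
  apply: (@missb_post _ _ _ _ _ _ _ (fun x => (x != n.+1) && (x != n.+2))).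
    by move=> i; rewrite (missbP Hm1) (missbP Hm2).
  move=> x Hx /andP [H1 H2]; rewrite /unbump; lia.
rewrite Hta; congr sact; apply: morP => i; rewrite !postME /tau1.
have := missbP Hm1 i; have := missbP Hm2 i; have := ltn_ord (val al i).
rewrite /unbump; lia.
Qed.

Lemma h2_E3 (C : sSet) (c : C 0) n (a : C n) (th : C n.+1) m (al : Mor m n.+2) :
  sphere c a -> (forall i, i <= n -> i != n.-1 -> face i th = const_s n c) -> 2 <= n ->
  missb al n -> h2fun c a th al = sact (postM n (@tau2_homo n) al) a.
Proof.
move=> Ha Htc Hn Hm0; rewrite /h2fun Hm0; case: ifP => Hm2.
  rewrite (@sact_face _ _ th _ _ n) //; last first.
    apply: (@missb_post _ _ _ _ _ _ _ (fun x => (x != n) && (x != n.+2))).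
      by move=> i; rewrite (missbP Hm0) (missbP Hm2).
    move=> x Hx /andP [H1 H2]; rewrite /unbump; lia.
  rewrite Htc //; last lia.
  rewrite const_nat; symmetry; apply: (sphere_const (j := n)) => //.
  apply: (@missb_post _ _ _ _ _ _ _ (fun x => (x != n) && (x != n.+2))).
    by move=> i; rewrite (missbP Hm0) (missbP Hm2).
  move=> x Hx /andP [H1 H2]; rewrite /tau2; case: (ltnP x n); case: (leqP x n.+1); lia.
case: ifP => // Hm1; congr sact; apply: morP => i; rewrite !postME /tau1 /tau2.
move: (missbP Hm1 i) (missbP Hm0 i) (ltn_ord (val al i)).
set x := nat_of_ord (val al i) => H1 H0 Hx.
case: (ltnP x n); case: (leqP x n.+1); lia.
Qed.

Lemma h2_E4 (C : sSet) (c : C 0) n (a : C n) (th : C n.+1) m (al : Mor m n.+2) j :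
  sphere c a -> (forall i, i <= n -> i != n.-1 -> face i th = const_s n c) -> 2 <= n ->
  j < n.-1 -> missb al j -> h2fun c a th al = const_s m c.
Proof.
move=> Ha Htc Hn Hj Hm; rewrite /h2fun; case: ifP => Hm2.
  rewrite (@sact_face _ _ th _ _ j); [|lia|].
    rewrite Htc; [by rewrite const_nat | lia | lia].
  apply: (@missb_post _ _ _ _ _ _ _ (fun x => (x != j) && (x != n.+2))).
    by move=> i; rewrite (missbP Hm) (missbP Hm2).
  move=> x Hx /andP [H1 H2]; rewrite /unbump; lia.
case: ifP => Hm1.
  apply: (sphere_const (j := j)) => //; first lia.
  apply: (@missb_post _ _ _ _ _ _ _ (fun x => (x != j))).
    by move=> i; rewrite (missbP Hm).
  move=> x Hx H1; rewrite /tau1; lia.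
case: ifP => // Hm0.
apply: (sphere_const (j := j)) => //; first lia.
apply: (@missb_post _ _ _ _ _ _ _ (fun x => (x != j))).
  by move=> i; rewrite (missbP Hm).
move=> x Hx H1; rewrite /tau2; case: (ltnP x n); case: (leqP x n.+1); lia.
Qed.

Definition h2 (C : sSet) (c : C 0) n (a : C n) (th : C n.+1) (Ha : sphere c a)
  (Hta : face n.+1 th = a)
  (Htc : forall i, i <= n -> i != n.-1 -> face i th = const_s n c) (Hn : 2 <= n) :
  sMap (Horn n.+2 n.-1) C.
Proof.
refine (@SMap (Horn n.+2 n.-1) C (fun m al => h2fun c a th (val al)) _).
move=> m k f [al Hal] /=.
have [j [HjN Hjk Hm]] := hornb_inv Hal.
have Hmf := missb_comp f Hm.
case: (ltnP n.+1 j) => Hj2.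
  have Ej : j = n.+2 by lia.
  by subst j; rewrite !h2_E1 // postM_comp sact_comp.
case: (ltnP n j) => Hj1.
  have Ej : j = n.+1 by lia.
  by subst j; rewrite !h2_E2 // postM_comp sact_comp.
case: (ltnP n.-1 j) => Hj0.
  have Ej : j = n by lia.
  by subst j; rewrite !(h2_E3 Ha Htc) // postM_comp sact_comp.
by rewrite !(h2_E4 (j := j) Ha Htc) //; [rewrite const_nat | lia | lia].
Defined.

Lemma gammaE n i x : 1 <= n -> i <= n.+1 ->
  nat_of_ord (val (compM (dface n.+1 n.-1) (dface n i)) x) = bump n.-1 (bump i x).
Proof. by move=> Hn Hi; rewrite compME !dfaceE //; lia. Qed.

Theorem mainTheorem7 (C : sSet) (HC : quasicat C) (c : C 0) (n : nat) :
  2 <= n ->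
  forall a : C n, sphere c a ->
    exists b : C n, sphere c b /\
      tau_mul (X := Ce C) c a b (const_s n c) /\
      tau_mul (X := Ce C) c b a (const_s n c).
Proof.
move=> Hn a Ha.
have [th [Hta Htc Hb]] := step1 HC Hn Ha.
have [s Hs] := HC n.+2 n.-1 ltac:(apply/andP; split; lia) (h2 Ha Hta Htc Hn).
have Hsh : forall m (g : Mor m n.+2) j, j <= n.+2 -> j != n.-1 -> missb g j ->
    s m g = h2fun c a th g.
  move=> m g j Hj Hjk Hm.
  exact: (Hs m (exist _ g (hornb_of Hj Hjk Hm))).
pose t1 := face n.-1 (s n.+2 (idM n.+2)).
have Hface : forall i, i <= n.+1 ->
    face i t1 = h2fun c a th (compM (dface n.+1 n.-1) (dface n i)).
  move=> i Hi; rewrite /t1 /face sact_comp -smap_yon (Hsh _ _ (bump n.-1 i)).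
  - by [].
  - rewrite /bump; lia.
  - rewrite /bump; lia.
  - apply/forallP=> x; rewrite gammaE; [|lia|lia]; rewrite /bump; lia.
have Hk1 : 1 <= n by lia.
have Hk2 : n < n.+1 by lia.
exists (face n.-1 th); split => //; split.
- exists (yonS t1 Hk1 Hk2); split.
  + rewrite /= -/(face n.-1 t1) Hface; last lia.
    rewrite (h2_E3 Ha Htc) //; last first.
      apply/forallP=> x; rewrite gammaE; [|lia|lia]; rewrite /bump; lia.
    have -> : postM n (@tau2_homo n) (compM (dface n.+1 n.-1) (dface n n.-1)) = idM n.
      apply: morP => x; rewrite postME gammaE; [|lia|lia]; rewrite idME.
      have Hx := ltn_ord x; rewrite /tau2.
      case: (ltnP x n.-1) => Hxn.
        have -> : bump n.-1 (bump n.-1 x) = x by rewrite /bump; lia.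
        case: (ltnP x n); case: (leqP x n.+1); lia.
      have -> : bump n.-1 (bump n.-1 x) = x.+2 by rewrite /bump; lia.
      case: (ltnP x.+2 n); case: (leqP x.+2 n.+1); lia.
    by rewrite sact_id.
  + rewrite /= -/(face n.+1 t1) Hface //.
    rewrite h2_E1; last first.
      apply/forallP=> x; rewrite gammaE; [|lia|lia]; rewrite /bump; lia.
    rewrite /face; congr sact; apply: morP => x; rewrite postME gammaE; [|lia|lia].
    rewrite dfaceE; last lia.
    have := ltn_ord x; rewrite /bump /unbump; lia.
  + move=> i Hi H1 H2 H3; rewrite /= -/(face i t1) Hface //.
    apply: (h2_E4 (j := i) Ha Htc) => //; first lia.
    apply/forallP=> x; rewrite gammaE; [|lia|lia]; rewrite /bump; lia.
  + rewrite /= -/(face n t1) Hface; last lia.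
    rewrite h2_E2 //; last first.
      apply/forallP=> x; rewrite gammaE; [|lia|lia]; rewrite /bump; lia.
    rewrite (sphere_const (x := c) (j := n.-1)) //; first exact: htpy_const.
      lia.
    apply/forallP=> x; rewrite postME gammaE; [|lia|lia]; rewrite /bump /tau1; lia.
- exists (yonS th Hk1 Hk2); split.
  + by [].
  + exact: Hta.
  + move=> i Hi H1 H2 H3; rewrite /= -/(face i th) Htc //; lia.
  + rewrite /= -/(face n th) Htc; [exact: htpy_const | lia | lia].
Qed.
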